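(* Let $p$ be a prime and $n,k$ positive integers with $(p,k-1)=1$ and $n=\mathrm{ind}_p(k)$; let $G=G(p,n,k)=\langle a,b;\ a^p=1,\ b^n=1,\ b^{-1}ab=a^k\rangle$, $R=\{k^j-1 \bmod p: j\in\mathbb{Z}_n\}$ and $L=\{1-k^j \bmod p: j\in\mathbb{Z}_n\}$. Then the following are equivalent: (i) $\mathrm{P}(G)=\Lambda(G)$; (ii) $\mathrm{P}(G)\cong\Lambda(G)$; (iii) $|\mathrm{P}(G)|=|\Lambda(G)|$; (iv) $|R^*|=|L^*|$.
   Context: $\mathrm{ind}_p(k)$ is the least positive integer $d$ with $k^d\equiv 1\pmod p$. $S^*$ denotes the multiplicative subsemigroup of $\mathbb{Z}_p$ generated by $S$. Commutators are $[x,y]=x^{-1}y^{-1}xy$. For $g\in G$, $\rho(g),\lambda(g):G\to G$ are $(x)\rho(g)=[x,g]$, $(x)\lambda(g)=[g,x]$. $\mathrm{P}(G)$ and $\Lambda(G)$ are the subsemigroups (under composition) of the semigroup of all maps $G\to G$ generated by $\{\rho(g):g\in G\}$ and $\{\lambda(g):g\in G\}$ respectively. *)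

(* Defs.v *)
From HB Require Import structures.
From mathcomp Require Import all_boot all_algebra all_fingroup.
From mathcomp Require Import boolp.
Set Implicit Arguments. Unset Strict Implicit. Unset Printing Implicit Defensive.

Definition is_ind (p k d : nat) : Prop :=
  [/\ 0 < d, k ^ d = 1 %[mod p] &
      forall e, 0 < e -> k ^ e = 1 %[mod p] -> d <= e].

Inductive in_gen_sg (T : Type) (op : T -> T -> T) (S : T -> Prop) : T -> Prop :=
  | gen_sg_base x : S x -> in_gen_sg op S x
  | gen_sg_op x y : in_gen_sg op S x -> in_gen_sg op S y -> in_gen_sg op S (op x y).

Definition gen_sg (T : finType) (op : T -> T -> T) (S : {set T}) : {set T} :=
  [set x | `[< in_gen_sg op (fun y => y \in S) x >] ].

(* composition of maps written on the right: (x)(f g) = ((x)f)g *)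
Definition rcomp (T : finType) (f g : {ffun T -> T}) : {ffun T -> T} :=
  [ffun x => g (f x)].

Local Open Scope group_scope.
Definition rho (gT : finGroupType) (g : gT) : {ffun gT -> gT} := [ffun x => [~ x, g]].
Definition lam (gT : finGroupType) (g : gT) : {ffun gT -> gT} := [ffun x => [~ g, x]].

Definition Rho_sg (gT : finGroupType) : {set {ffun gT -> gT}} :=
  gen_sg (@rcomp gT) [set rho g | g : gT].
Definition Lam_sg (gT : finGroupType) : {set {ffun gT -> gT}} :=
  gen_sg (@rcomp gT) [set lam g | g : gT].

Definition sg_isomorphic (T : finType) (op : T -> T -> T) (A B : {set T}) : Prop :=
  exists phi : T -> T,
    [/\ {in A &, injective phi}, phi @: A = B &
        {in A &, forall f g, phi (op f g) = op (phi f) (phi g)}].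

(* Main.v *)
Require Import Defs.
From HB Require Import structures.
From mathcomp Require Import all_boot all_algebra all_fingroup all_solvable.
From mathcomp Require Import boolp ring.
Import GRing.Theory.
Local Open Scope ring_scope.

Lemma gen_sg_base_in (T : finType) (op : T -> T -> T) (S : {set T}) z :
  z \in S -> z \in gen_sg op S.
Proof. by move=> zS; rewrite inE; apply/asboolP; apply: gen_sg_base. Qed.

Lemma gen_sg_op_in (T : finType) (op : T -> T -> T) (S : {set T}) u v :
  u \in gen_sg op S -> v \in gen_sg op S -> op u v \in gen_sg op S.
Proof.
rewrite !inE => /asboolP hu /asboolP hv; apply/asboolP; exact: gen_sg_op.
Qed.

Lemma gen_sgP (T : finType) (op : T -> T -> T) (S : {set T}) z :
  z \in gen_sg op S -> in_gen_sg op (fun y => y \in S) z.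
Proof. by rewrite inE => /asboolP. Qed.

Section FieldPart.
Variable F : finFieldType.

Lemma mulclosed_pow (S : {set F}) (mS : forall u v, u \in S -> v \in S -> u * v \in S)
  z : z \in S :\ 0 -> z ^+ #|S :\ 0| = 1.
Proof.
set H := S :\ 0 => zH.
have z0 : z != 0 by move: zH; rewrite !inE => /andP[].
have HH : forall w, w \in H -> z * w \in H.
  move=> w; rewrite !inE => /andP[w0 wS]; move: zH; rewrite !inE => /andP[_ zS].
  by rewrite mulf_neq0 // mS.
have inj : {in H &, injective (fun w => z * w)}.
  by move=> u v _ _; apply: mulfI.
have eqH : [set z * w | w in H] = H.
  apply/eqP; rewrite eqEcard card_in_imset // leqnn andbT.
  by apply/subsetP => w /imsetP[u uH ->]; apply: HH.
have P0 : \prod_(w in H) w != 0.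
  by apply/prodf_neq0 => w; rewrite !inE => /andP[].
apply: (mulIf P0); rewrite mul1r -prodr_const -big_split /=.
by rewrite -[in RHS]eqH big_imset.
Qed.

Lemma mulclosed_char (S : {set F}) (mS : forall u v, u \in S -> v \in S -> u * v \in S)
  (S0 : 0 \in S) :
  S = if #|S| == 1%N then [set 0] else 0 |: [set z | z ^+ (#|S|).-1 == 1].
Proof.
have cS : #|S| = (#|S :\ 0|).+1 by rewrite (cardsD1 0) S0.
case: ifP => [/eqP c1|c1].
  by apply/eqP; rewrite eq_sym eqEcard sub1set S0 cards1 c1.
rewrite cS /= -{1}(setD1K S0); congr (_ |: _).
set d := #|S :\ 0|.
have d0 : (0 < d)%N by move: c1; rewrite cS -/d; case: d.
apply/eqP; rewrite eqEcard; apply/andP; split.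
  by apply/subsetP => z zH; rewrite inE mulclosed_pow.
rewrite cardE; apply: max_unity_roots => //; last exact: enum_uniq.
by apply/allP => z; rewrite mem_enum inE => /eqP zd; apply/unity_rootP.
Qed.

End FieldPart.

Section GroupPart.
Variables (p n k : nat) (gT : finGroupType) (x y : gT).
Hypotheses (pP : prime p) (n0 : (0 < n)%N) (xp : (x ^+ p = 1)%g) (yn : (y ^+ n = 1)%g)
  (xy : (x ^ y = x ^+ k)%g) (x1 : x != 1%g) (gen : (<[x]> <*> <[y]> = [set: gT])%g).
Local Notation F := 'F_p.
Local Notation kk := (k%:R : F).
Local Notation K j := (kk ^+ j)%R.

Definition X (e : F) : gT := (x ^+ (e : nat))%g.

Lemma Xn m : X m%:R = (x ^+ m)%g.
Proof. by rewrite /X val_Fp_nat // expg_mod. Qed.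

Lemma natF (e : F) : (e : nat)%:R = e.
Proof.
apply: val_inj; rewrite /= val_Fp_nat // modn_small //.
by rewrite -[X in (_ < X)%N](Fp_cast pP) ltn_ord.
Qed.

Lemma XD a b : X (a + b) = (X a * X b)%g.
Proof. by rewrite -(natF a) -(natF b) -natrD !Xn expgD. Qed.

Lemma XM a b : X (a * b) = (X a ^+ b)%g.
Proof. by rewrite -{1}(natF a) -{1}(natF b) -natrM Xn expgM. Qed.

Lemma X0 : X 0 = 1%g.
Proof. by rewrite /X. Qed.

Lemma ordx : #[x]%g = p.
Proof.
apply/(prime_nt_dvdP pP); first by rewrite order_eq1.
by rewrite order_dvdn xp.
Qed.

Lemma Xinj : injective X.
Proof.
move=> a b /eqP; rewrite /X eq_expg_mod_order ordx.
have lt (e : F) : (e < p)%N by rewrite -[X in (_ < X)%N](Fp_cast pP) ltn_ord.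
by rewrite !modn_small // => /eqP ab; apply: val_inj.
Qed.

Lemma XJ a j : (X a ^ (y ^+ j))%g = X (a * K j).
Proof.
elim: j a => [|j IH] a; first by rewrite expg0 conjg1 expr0 mulr1.
rewrite expgSr conjgM IH {1}/X conjXg xy -expgM -Xn.
congr X; rewrite natrM !natF exprS; ring.
Qed.

Lemma XC a j : (X a * y ^+ j = y ^+ j * X (a * K j)%R)%g.
Proof. by rewrite conjgC XJ. Qed.

Lemma NF a m b l :
  (X a * y ^+ m * (X b * y ^+ l) = y ^+ (m + l) * X ((a * K m + b) * K l)%R)%g.
Proof.
by rewrite XC -!mulgA (mulgA (X _)) -XD XC mulgA -expgD.
Qed.

Lemma comm_form i j s t :
  [~ X i * y ^+ j, X s * y ^+ t]%g = X (i * K j * (K t - 1) + s * K t * (1 - K j)).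
Proof.
apply: (@mulgI _ (X s * y ^+ t * (X i * y ^+ j))%g); rewrite -commgC.
rewrite !NF -mulgA -XD addnC; congr (_ * X _)%g; ring.
Qed.

Lemma decomp g : exists i (j : 'I_n), g = (X i * y ^+ j)%g.
Proof.
have nxy : <[y]>%g \subset 'N(<[x]>)%g.
  rewrite cycle_subG; apply/normP; apply/eqP.
  rewrite -cycleJ eqEcard -[#|<[x ^ y]>%g|]/(#[x ^ y]%g) (orderJ x y) leqnn andbT.
  by rewrite xy cycle_subG mem_cycle.
have : g \in [set: gT] by rewrite inE.
rewrite -gen norm_joinEr // => /mulsgP[u v /cycleP[m ->] /cycleP[l ->] ->].
exists (m%:R), (Ordinal (ltn_pmod l n0)).
by rewrite Xn /= expg_mod.
Qed.


Hypothesis kk1 : kk != 1.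

Lemma X1 : X 1 = x.
Proof. by have := Xn 1; rewrite expg1 mulr1n. Qed.

Definition D (a b : F) : {ffun gT -> gT} :=
  [ffun g => ([~ g, y] ^+ (a / (kk - 1))%R * [~ g, x] ^+ (- b)%R)%g].

Lemma Dval a b i j :
  D a b (X i * y ^+ j)%g = X (a * i * K j + b * (K j - 1)).
Proof.
have c1 := comm_form i j 0 1; rewrite X0 mul1g expg1 in c1.
have c2 := comm_form i j 1 0; rewrite X1 expg0 mulg1 in c2.
have k10 : kk - 1 != 0 by rewrite subr_eq0.
rewrite ffunE c1 c2 -!XM -XD; congr X.
by field.
Qed.

Lemma rho_D s t : rho (X s * y ^+ t)%g = D (K t - 1) (- s * K t).
Proof.
apply/ffunP => g; have [i [j ->]] := decomp g.
by rewrite Dval ffunE comm_form; congr X; ring.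
Qed.

Lemma lam_D s t : lam (X s * y ^+ t)%g = D (1 - K t) (s * K t).
Proof.
apply/ffunP => g; have [i [j ->]] := decomp g.
by rewrite Dval ffunE comm_form; congr X; ring.
Qed.

Lemma rcomp_D a b a' b' : rcomp (D a b) (D a' b') = D (a' * a) (a' * b).
Proof.
apply/ffunP => g; have [i [j ->]] := decomp g.
rewrite /rcomp ffunE [in RHS]Dval Dval -[X (_ + _) in LHS]mulg1 -(expg0 y) Dval.
congr X; rewrite expr0; ring.
Qed.

Lemma D_inj a b a' b' : D a b = D a' b' -> a = a' /\ b = b'.
Proof.
move=> E.
have h1 := congr1 (fun f : {ffun gT -> gT} => f (X 1%R * y ^+ 0)%g) E.
have h2 := congr1 (fun f : {ffun gT -> gT} => f (X 0 * y ^+ 1)%g) E.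
move: h1 h2 => /= /[!Dval] /Xinj h1 /Xinj h2.
rewrite expr0 subrr !mulr0 !addr0 !mulr1 in h1; split => //.
rewrite h1 !mulr0 !mul0r !add0r expr1 in h2.
have k10 : kk - 1 != 0 by rewrite subr_eq0.
exact: (mulIf k10).
Qed.

Lemma gen_char (Q : {set F}) (Q0 : 0 \in Q) (S : {set {ffun gT -> gT}})
  (h1 : forall f, f \in S -> exists a b, a \in Q /\ f = D a b)
  (h2 : forall a b, a \in Q -> D a b \in S) :
  gen_sg (@rcomp gT) S = [set D z.1 z.2 | z in setX (gen_sg *%R Q) setT].
Proof.
apply/setP => f; apply/idP/idP.
  move/gen_sgP; elim => [g /h1 [a [b [aQ ->]]] | g1 g2 _ IH1 _ IH2].
    by apply/imsetP; exists (a, b); rewrite // in_setX in_setT andbT gen_sg_base_in.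
  case/imsetP: IH1 => [[a b]]; rewrite in_setX in_setT andbT => aQ ->.
  case/imsetP: IH2 => [[a' b']]; rewrite in_setX in_setT andbT => aQ' ->.
  rewrite rcomp_D; apply/imsetP; exists (a' * a, a' * b) => //.
  by rewrite in_setX in_setT andbT; apply: gen_sg_op_in.
case/imsetP => [[a b]]; rewrite in_setX in_setT andbT => /gen_sgP aQ -> /=.
elim: aQ b => [a' a'Q | a1 a2 _ IH1 _ IH2] b.
  exact/gen_sg_base_in/h2.
have [->|a10] := eqVneq a1 0.
  by rewrite mul0r; apply/gen_sg_base_in/h2.
have -> : D (a1 * a2) b = rcomp (D a2 (b / a1)) (D a1 0).
  by rewrite rcomp_D [a1 * (b / a1)]mulrC divfK.
exact: gen_sg_op_in.
Qed.

Lemma card_D (A : {set F}) :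
  #|[set D z.1 z.2 | z in setX A setT]| = (#|A| * p)%N.
Proof.
rewrite card_in_imset ?cardsX ?cardsT ?card_Fp //.
move=> [a b] [a' b'] _ _ /= /D_inj [-> ->] //.
Qed.

End GroupPart.

Section Model.
Variables (p n k : nat) (pP : prime p).
Local Notation F := 'F_p.
Local Notation kk := (k%:R : F).
Hypotheses (kk0 : kk != 0) (kk1 : kk != 1) (kn : kk ^+ n = 1).

Lemma inj_add1 : injective (fun z : F => z + 1).
Proof. by move=> u v /(congr1 (fun w => w - 1)); rewrite !addrK. Qed.

Lemma inj_mulk : injective (fun z : F => z * kk).
Proof. exact: mulIf kk0. Qed.

Definition pa : {perm F} := perm inj_add1.
Definition pb : {perm F} := perm inj_mulk.

Lemma paX m z : (pa ^+ m)%g z = z + m%:R.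
Proof.
elim: m z => [|m IH] z; first by rewrite expg0 perm1 addr0.
by rewrite expgSr permM IH permE /= mulrS; ring.
Qed.

Lemma pbX m z : (pb ^+ m)%g z = z * kk ^+ m.
Proof.
elim: m z => [|m IH] z; first by rewrite expg0 perm1 expr0 mulr1.
by rewrite expgSr permM IH permE /= exprSr mulrA.
Qed.

Lemma pJ : (pa ^ pb = pa ^+ k)%g.
Proof.
apply/permP => z; rewrite -(permKV pb z); move: (pb^-1 z)%g => w.
by rewrite permJ paX !permE /=; ring.
Qed.

Lemma p_nc : (pa * pb != pb * pa)%g.
Proof.
apply/eqP => /(congr1 (fun s : {perm F} => s 0)); rewrite !permM !permE /=.
by rewrite add0r mul1r mul0r add0r => /eqP; rewrite (negPf kk1).
Qed.

Lemma model_hom :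
  ((<[pa]> <*> <[pb]>)%G \homg Grp (a : b : (a ^+ p, b ^+ n, a ^ b = a ^+ k)))%g.
Proof.
apply/existsP; exists (pa, pb); rewrite /= !xpair_eqE /=.
apply/and4P; split => //; apply/eqP; last exact: pJ.
  by apply/permP => z; rewrite paX perm1 -(Fp_nat_mod pP) modnn addr0.
by apply/permP => z; rewrite pbX perm1 kn mulr1.
Qed.


End Model.

Lemma ext_gen (p n k : nat) (gT : finGroupType) :
  ([set: gT] \homg Grp (a : b : (a ^+ p, b ^+ n, a ^ b = a ^+ k)))%g ->
  exists x y : gT, [/\ (<[x]> <*> <[y]> = [set: gT])%g, (x ^+ p = 1)%g,
     (y ^+ n = 1)%g & (x ^ y = x ^+ k)%g].
Proof.
move=> /existsP [[x y]] /=.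
rewrite !xpair_eqE /=. case/and4P => /eqP h1 /eqP h2 /eqP h3 /eqP h4.
by exists x, y.
Qed.

Local Close Scope ring_scope.

Theorem theorem6p7 (p n k : nat) (gT : finGroupType)
  (p_prime : prime p) (n_gt0 : 0 < n) (k_gt0 : 0 < k)
  (cop : coprime p k.-1) (n_ind : is_ind p k n)
  (G_pres : ([set: gT] \isog Grp (a : b : (a ^+ p, b ^+ n, a ^ b = a ^+ k)))%g) :
  let R : {set 'F_p} := [set ((k%:R : 'F_p) ^+ j - 1)%R | j : 'I_n] in
  let L : {set 'F_p} := [set (1 - (k%:R : 'F_p) ^+ j)%R | j : 'I_n] in
  [<-> Rho_sg gT = Lam_sg gT;
       sg_isomorphic (@rcomp gT) (Rho_sg gT) (Lam_sg gT);
       #|Rho_sg gT| = #|Lam_sg gT|;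
       #|gen_sg (@GRing.mul 'F_p) R| = #|gen_sg (@GRing.mul 'F_p) L| ].
Proof.
Local Open Scope ring_scope.
move=> R L.
have kk1 : (k%:R : 'F_p) != 1.
  apply/eqP => h.
  have h' : (k%:R : 'F_p) = 1%:R by rewrite h.
  have := congr1 (@nat_of_ord _) h'; rewrite !val_Fp_nat // => /eqP.
  rewrite eqn_mod_dvd // => dv.
  by move: cop; rewrite prime_coprime // -subn1 dv.
have kn : (k%:R : 'F_p) ^+ n = 1.
  case: n_ind => _ kn _.
  suff : ((k ^ n)%:R : 'F_p) = 1%:R by rewrite natrX.
  by apply: val_inj; rewrite /= val_Fp_nat // kn -(val_Fp_nat p_prime 1) mulr1n.
have kk0 : (k%:R : 'F_p) != 0.
  apply/eqP => h; move: kn; rewrite h expr0n eqn0Ngt n_gt0 /= => /eqP.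
  by rewrite eq_sym oner_eq0.
have [x [y [gen xp yn xy]]] := ext_gen _ _ _ _ (isoGrp_hom G_pres).
have x1 : x != 1%g.
  apply/eqP => x1'; rewrite x1' cycle1 joing1G in gen.
  have abT : abelian [set: gT] by rewrite -gen cycle_abelian.
  have := G_pres _ (<[pa p]> <*> <[(@pb p k kk0)]>)%G.
  rewrite (@model_hom p n k p_prime kk0 kn) => /homgP [f fM].
  have abM : abelian (<[pa p]> <*> <[(@pb p k kk0)]>)%g.
    by rewrite -fM morphim_abelian.
  have ina : pa p \in (<[pa p]> <*> <[(@pb p k kk0)]>)%g.
    by apply: (subsetP (joing_subl _ _)); apply: cycle_id.
  have inb : (@pb p k kk0) \in (<[pa p]> <*> <[(@pb p k kk0)]>)%g.
    by apply: (subsetP (joing_subr _ _)); apply: cycle_id.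
  have := (centsP abM) _ ina _ inb; rewrite /commute => /eqP.
  by rewrite (negPf (@p_nc p k kk0 kk1)).
set Rs := gen_sg *%R R; set Ls := gen_sg *%R L.
have R0 : 0 \in R by apply/imsetP; exists (Ordinal n_gt0); rewrite //= expr0 subrr.
have L0 : 0 \in L by apply/imsetP; exists (Ordinal n_gt0); rewrite //= expr0 subrr.
have Kt0 t : (k%:R : 'F_p) ^+ t != 0 by rewrite expf_neq0.
have rhoE : Rho_sg gT = [set @D p k gT x y z.1 z.2 | z in setX Rs setT].
  apply: (@gen_char p n k gT x y p_prime n_gt0 xp yn xy gen kk1 _ R0).
    move=> f /imsetP [g _ ->]; have [s [t ->]] := @decomp p n k gT x y p_prime n_gt0 xp yn xy gen g.
    rewrite (@rho_D p n k gT x y p_prime n_gt0 xp yn xy gen kk1); do 2 eexists; split; last reflexivity.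
    by apply/imsetP; exists t.
  move=> a b /imsetP [t _ ->]; apply/imsetP; exists (@X p gT x ((- b / (k%:R ^+ t))%R) * y ^+ t)%g => //.
  by rewrite (@rho_D p n k gT x y p_prime n_gt0 xp yn xy gen kk1) mulNr divfK // opprK.
have lamE : Lam_sg gT = [set @D p k gT x y z.1 z.2 | z in setX Ls setT].
  apply: (@gen_char p n k gT x y p_prime n_gt0 xp yn xy gen kk1 _ L0).
    move=> f /imsetP [g _ ->]; have [s [t ->]] := @decomp p n k gT x y p_prime n_gt0 xp yn xy gen g.
    rewrite (@lam_D p n k gT x y p_prime n_gt0 xp yn xy gen kk1); do 2 eexists; split; last reflexivity.
    by apply/imsetP; exists t.
  move=> a b /imsetP [t _ ->]; apply/imsetP; exists (@X p gT x ((b / (k%:R ^+ t))%R) * y ^+ t)%g => //.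
  by rewrite (@lam_D p n k gT x y p_prime n_gt0 xp yn xy gen kk1) divfK.
have cR : #|Rho_sg gT| = (#|Rs| * p)%N by rewrite rhoE (@card_D p k gT x y p_prime xp xy x1 kk1).
have cL : #|Lam_sg gT| = (#|Ls| * p)%N by rewrite lamE (@card_D p k gT x y p_prime xp xy x1 kk1).
tfae => [E | [phi [inj im hom]] | c | c].
- exists id; split; [by move=> ? ? _ _ | by rewrite imset_id E | by []].
- by rewrite -im card_in_imset.
- by apply/eqP; rewrite -(eqn_pmul2r (prime_gt0 p_prime)) -cR -cL c.
- have mR u v : u \in Rs -> v \in Rs -> u * v \in Rs by apply: gen_sg_op_in.
  have mL u v : u \in Ls -> v \in Ls -> u * v \in Ls by apply: gen_sg_op_in.
  have eRL : Rs = Ls.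
    rewrite [LHS](@mulclosed_char _ _ mR (@gen_sg_base_in _ _ _ _ R0)).
    by rewrite [RHS](@mulclosed_char _ _ mL (@gen_sg_base_in _ _ _ _ L0)) c.
  by rewrite rhoE lamE eRL.
Qed.
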